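(* Let $m\ge 2$ and $0\le c<1$, and consider the best-worst rule $s=(c,m)$. A profile $x=((x^1,n_1),\dots,(x^q,n_q))$ with $q\ge 2$ is a non-convergent Nash equilibrium if and only if all of the following hold, where $I^p:=\ell(I_1^R)$: (i) $n_i\le 2$ for all $i\in[q]$, and $n_1=n_q=2$; (ii) $\ell(I_q^L)=I^p$, and for every $1<i<q$ with $n_i=2$ we have $\ell(I_i^L)=\ell(I_i^R)=I^p$; (iii) $\ell(I_1^L)=\ell(I_q^R)=I^p+\frac{c}{2}$; (iv) for every $i$ with $n_i=1$: $\ell(I_i)\ge \ell(I_k^L)$ for all $k\neq 1$ and $\ell(I_i)\ge \ell(I_k^R)$ for all $k\ne q$; (v) $I^p\ge \ell(I_k^L)$ for all $k\ne 1$ and $I^p\ge \ell(I_k^R)$ for all $k\ne q$.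
   Context: Setting: voters' ideal points are distributed uniformly (unit mass, Lebesgue measure) on $[0,1]$. There are $m$ candidates; a profile is $x=(x_1,\dots,x_m)\in[0,1]^m$. A voter with ideal point $y$ ranks candidates by distance $|x_i-y|$ (closer is better); ties are broken by a fair lottery (uniformly random strict order among tied candidates). Under the best-worst rule $s=(c,m)$ ($c\ge0$), a candidate receives $1$ point from each voter ranking her first, $-c$ from each voter ranking her last ($m$-th), and $0$ otherwise; $v_i(x)$ is candidate $i$'s expected total points. A (pure-strategy Nash) equilibrium is a profile $x^*$ with $v_i(x^* )\ge v_i(t,x^*_{-i})$ for all $i$ and $t\in[0,1]$ ($(t,x_{-i})$ is $x$ with $x_i$ replaced by $t$); it is non-convergent (NCNE) if at least two platforms are distinct. Notation: $[n]=\{1,\dots,n\}$. A profile determines its distinct occupied positions $x^1<x^2<\dots<x^q$, with $n_j$ the number of candidates at $x^j$; we write $x=((x^1,n_1),\dots,(x^q,n_q))$. For an interval $I=[a,b]$, $\ell(I)=b-a$. For $q\ge2$ the full-electorates are $I_1=[0,(x^1+x^2)/2]$, $I_i=[(x^{i-1}+x^i)/2,(x^i+x^{i+1})/2]$ for $2\le i\le q-1$, and $I_q=[(x^{q-1}+x^q)/2,1]$; the half-electorates are $I_i^L=\{y\in I_i: y\le x^i\}$ and $I_i^R=\{y\in I_i:y\ge x^i\}$. *)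

(* Defs.v *)
From Stdlib Require Import Reals Lra List ClassicalEpsilon.
Import ListNotations.
Open Scope R_scope.

(* Integral over [0,1] (Riemann); voters have uniform (Lebesgue) density on [0,1].
   Defined as RiemannInt when f is Riemann integrable on [0,1] (value independent
   of the integrability proof), 0 otherwise. All score densities below are
   piecewise constant with finitely many pieces, hence integrable. *)
Definition integral01 (f : R -> R) : R :=
  match excluded_middle_informative (exists pr : Riemann_integrable f 0 1, True) with
  | left H => RiemannInt (proj1_sig (constructive_indefinite_description _ H))
  | right _ => 0
  end.

(* A profile of m candidates: x : nat -> R, candidate j < m at position x j. *)
Definition dist (x : nat -> R) (j : nat) (y : R) : R := Rabs (x j - y).

Definition n_tied (m : nat) (x : nat -> R) (i : nat) (y : R) : nat :=
  length (filter (fun j => if Req_EM_T (dist x j y) (dist x i y) then true else false)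
                 (seq 0 m)).

Definition is_closest (m : nat) (x : nat -> R) (i : nat) (y : R) : bool :=
  forallb (fun j => if Rle_dec (dist x i y) (dist x j y) then true else false) (seq 0 m).

Definition is_farthest (m : nat) (x : nat -> R) (i : nat) (y : R) : bool :=
  forallb (fun j => if Rle_dec (dist x j y) (dist x i y) then true else false) (seq 0 m).

(* Expected points candidate i gets from voter y under the best-worst rule (c,m),
   with ties broken by a uniformly random strict order among tied candidates:
   P(i ranked first) = 1/#closest if i closest, P(i ranked last) = 1/#farthest
   if i farthest. *)
Definition voter_score (m : nat) (c : R) (x : nat -> R) (i : nat) (y : R) : R :=
  (if is_closest m x i y then / INR (n_tied m x i y) else 0)
  - c * (if is_farthest m x i y then / INR (n_tied m x i y) else 0).

Definition v (m : nat) (c : R) (x : nat -> R) (i : nat) : R :=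
  integral01 (voter_score m c x i).

Definition deviate (x : nat -> R) (i : nat) (t : R) : nat -> R :=
  fun j => if Nat.eqb j i then t else x j.

Definition is_profile (m : nat) (x : nat -> R) : Prop :=
  forall j, (j < m)%nat -> 0 <= x j <= 1.

Definition is_NE (m : nat) (c : R) (x : nat -> R) : Prop :=
  is_profile m x /\
  forall i, (i < m)%nat -> forall t, 0 <= t <= 1 ->
    v m c x i >= v m c (deviate x i t) i.

Definition is_NCNE (m : nat) (c : R) (x : nat -> R) : Prop :=
  is_NE m c x /\ exists i j, (i < m)%nat /\ (j < m)%nat /\ x i <> x j.

Definition n_at (m : nat) (x : nat -> R) (p : R) : nat :=
  length (filter (fun j => if Req_EM_T (x j) p then true else false) (seq 0 m)).

(* x = ((pos 1, n 1), ..., (pos q, n q)): pos 1 < ... < pos q are exactly the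
   distinct occupied positions (1-based indexing), n k the multiplicities. *)
Definition decomposition (m : nat) (x : nat -> R) (q : nat) (pos : nat -> R) (n : nat -> nat) : Prop :=
  (forall k, (1 <= k)%nat -> (k < q)%nat -> pos k < pos (S k)) /\
  (forall j, (j < m)%nat -> exists k, (1 <= k <= q)%nat /\ x j = pos k) /\
  (forall k, (1 <= k <= q)%nat -> exists j, (j < m)%nat /\ x j = pos k) /\
  (forall k, (1 <= k <= q)%nat -> n k = n_at m x (pos k)).

Definition lenL (q : nat) (pos : nat -> R) (k : nat) : R :=
  if Nat.eqb k 1%nat then pos 1%nat - 0 else (pos k - pos (k - 1)%nat) / 2.
Definition lenR (q : nat) (pos : nat -> R) (k : nat) : R :=
  if Nat.eqb k q then 1 - pos q else (pos (S k) - pos k) / 2.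
Definition lenI (q : nat) (pos : nat -> R) (k : nat) : R :=
  lenL q pos k + lenR q pos k.

(* Main.v *)
Require Import Defs.
From Stdlib Require Import Reals.
From Stdlib Require Import Lra Lia List ClassicalEpsilon FunctionalExtensionality.
Import ListNotations.
Open Scope R_scope.

Lemma SF_const_step (f : R -> R) (u w k : R) : u <= w ->
  (forall z, u < z < w -> f z = k) -> IsStepFun f u w.
Proof.
  intros Huw Hf. exists [u; w]. exists [k].
  repeat split.
  - intros i Hi. simpl in Hi. assert (i = 0%nat) by lia. subst. simpl. lra.
  - simpl. unfold Rmin. destruct (Rle_dec u w); lra.
  - simpl. unfold Rmax. destruct (Rle_dec u w); lra.
  - intros i Hi. simpl in Hi. assert (i = 0%nat) by lia. subst.
    intros z Hz. unfold open_interval in Hz. simpl in Hz. simpl. apply Hf; lra.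
Qed.

Lemma SF_const_int (f : R -> R) (u w k : R) : u <= w ->
  (forall z, u < z < w -> f z = k) -> Riemann_integrable f u w.
Proof.
  intros Huw Hf eps.
  exists (mkStepFun (SF_const_step f u w k Huw Hf)).
  exists (mkStepFun (StepFun_P4 u w 0)).
  split.
  - intros t Ht. simpl. unfold fct_cte. rewrite Rminus_diag, Rabs_R0. lra.
  - rewrite StepFun_P18. rewrite Rmult_0_l, Rabs_R0. apply cond_pos.
Qed.

Lemma SF_const_val (f : R -> R) (u w k : R) (pr : Riemann_integrable f u w) : u <= w ->
  (forall z, u < z < w -> f z = k) -> RiemannInt pr = k * (w - u).
Proof.
  intros Huw Hf.
  rewrite (RiemannInt_P18 pr (RiemannInt_P14 u w k) Huw).
  - apply RiemannInt_P15.
  - intros z Hz. unfold fct_cte. apply Hf; lra.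
Qed.

Lemma ind_int (h : R -> R) (a b k : R) : 0 <= a <= b -> b <= 1 ->
  (forall z, a < z < b -> h z = k) ->
  (forall z, (0 <= z < a \/ b < z <= 1) -> h z = 0) ->
  { pr : Riemann_integrable h 0 1 | RiemannInt pr = k * (b - a) }.
Proof.
  intros Hab Hb1 Hin Hout.
  assert (H1 : forall z, 0 < z < a -> h z = 0) by (intros; apply Hout; lra).
  assert (H3 : forall z, b < z < 1 -> h z = 0) by (intros; apply Hout; lra).
  pose (p1 := SF_const_int h 0 a 0 (proj1 Hab) H1).
  assert (Hab' : a <= b) by lra.
  pose (p2 := SF_const_int h a b k Hab' Hin).
  pose (p3 := SF_const_int h b 1 0 Hb1 H3).
  pose (p12 := RiemannInt_P24 p1 p2).
  exists (RiemannInt_P24 p12 p3).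
  rewrite <- (RiemannInt_P26 p12 p3).
  rewrite <- (RiemannInt_P26 p1 p2).
  rewrite (SF_const_val _ _ _ _ p1 (proj1 Hab) H1).
  rewrite (SF_const_val _ _ _ _ p2 Hab' Hin).
  rewrite (SF_const_val _ _ _ _ p3 Hb1 H3). ring.
Qed.

Lemma integral01_val (f : R -> R) (pr : Riemann_integrable f 0 1) :
  integral01 f = RiemannInt pr.
Proof.
  unfold integral01.
  destruct (excluded_middle_informative _) as [H|H].
  - apply RiemannInt_P5.
  - exfalso. apply H. exists pr. exact I.
Qed.

Lemma closest_true m y i z :
  (forall j, (j < m)%nat -> y j <> y i -> Rabs (y i - z) < Rabs (y j - z)) ->
  is_closest m y i z = true.
Proof.
  intros H. unfold is_closest. apply forallb_forall. intros j Hj.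
  apply in_seq in Hj. unfold Defs.dist.
  destruct (Rle_dec _ _) as [|Hn]; auto. exfalso. apply Hn.
  destruct (Req_EM_T (y j) (y i)) as [e|ne].
  - rewrite e. lra.
  - left. apply H; [lia|auto].
Qed.

Lemma closest_false m y i z :
  (exists j, (j < m)%nat /\ Rabs (y j - z) < Rabs (y i - z)) ->
  is_closest m y i z = false.
Proof.
  intros [j [Hj Hlt]]. destruct (is_closest m y i z) eqn:E; auto.
  unfold is_closest in E. rewrite forallb_forall in E.
  specialize (E j). rewrite in_seq in E. specialize (E ltac:(lia)).
  unfold Defs.dist in E. destruct (Rle_dec _ _); [lra|discriminate].
Qed.

Lemma farthest_true m y i z :
  (forall j, (j < m)%nat -> y j <> y i -> Rabs (y j - z) < Rabs (y i - z)) ->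
  is_farthest m y i z = true.
Proof.
  intros H. unfold is_farthest. apply forallb_forall. intros j Hj.
  apply in_seq in Hj. unfold Defs.dist.
  destruct (Rle_dec _ _) as [|Hn]; auto. exfalso. apply Hn.
  destruct (Req_EM_T (y j) (y i)) as [e|ne].
  - rewrite e. lra.
  - left. apply H; [lia|auto].
Qed.

Lemma farthest_false m y i z :
  (exists j, (j < m)%nat /\ Rabs (y i - z) < Rabs (y j - z)) ->
  is_farthest m y i z = false.
Proof.
  intros [j [Hj Hlt]]. destruct (is_farthest m y i z) eqn:E; auto.
  unfold is_farthest in E. rewrite forallb_forall in E.
  specialize (E j). rewrite in_seq in E. specialize (E ltac:(lia)).
  unfold Defs.dist in E. destruct (Rle_dec _ _); [lra|discriminate].
Qed.

Lemma ntied_eq m y i z :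
  (forall j, (j < m)%nat -> y j <> y i -> Rabs (y i - z) <> Rabs (y j - z)) ->
  n_tied m y i z = n_at m y (y i).
Proof.
  intros H. unfold n_tied, n_at. f_equal. apply filter_ext_in.
  intros j Hj. apply in_seq in Hj. unfold Defs.dist.
  destruct (Req_EM_T (y j) (y i)) as [e|ne].
  - rewrite e. destruct (Req_EM_T _ _); auto.
  - destruct (Req_EM_T _ _) as [e2|]; auto. exfalso. apply (H j); [lia|auto|]. auto.
Qed.

Lemma vformula m c y i Lend Rend lo hi :
  0 <= Lend <= Rend -> Rend <= 1 -> 0 <= lo <= hi -> hi <= 1 ->
  (forall z, Lend < z < Rend -> forall j, (j < m)%nat -> y j <> y i -> Rabs (y i - z) < Rabs (y j - z)) ->
  (forall z, 0 <= z <= 1 -> (z < Lend \/ Rend < z) -> exists j, (j < m)%nat /\ Rabs (y j - z) < Rabs (y i - z)) ->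
  (forall z, lo < z < hi -> forall j, (j < m)%nat -> y j <> y i -> Rabs (y j - z) < Rabs (y i - z)) ->
  (forall z, 0 <= z <= 1 -> (z < lo \/ hi < z) -> exists j, (j < m)%nat /\ Rabs (y i - z) < Rabs (y j - z)) ->
  v m c y i = (Rend - Lend) / INR (n_at m y (y i)) - c * (hi - lo) / INR (n_at m y (y i)).
Proof.
  intros HL HR Hlo Hhi HC1 HC2 HF1 HF2.
  set (N := n_at m y (y i)).
  set (h1 := fun z => if is_closest m y i z then / INR (n_tied m y i z) else 0).
  set (h2 := fun z => if is_farthest m y i z then / INR (n_tied m y i z) else 0).
  destruct (ind_int h1 Lend Rend (/ INR N)) as [pr1 E1]; auto.
  { intros z Hz. unfold h1. rewrite closest_true by (apply HC1; auto).
    rewrite ntied_eq; auto. intros j Hj Hne. specialize (HC1 z Hz j Hj Hne). lra. }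
  { intros z Hz. unfold h1. rewrite closest_false; auto. apply HC2; lra. }
  destruct (ind_int h2 lo hi (/ INR N)) as [pr2 E2]; auto.
  { intros z Hz. unfold h2. rewrite farthest_true by (apply HF1; auto).
    rewrite ntied_eq; auto. intros j Hj Hne. specialize (HF1 z Hz j Hj Hne). lra. }
  { intros z Hz. unfold h2. rewrite farthest_false; auto. apply HF2; lra. }
  pose (pr := RiemannInt_P10 (- c) pr1 pr2).
  assert (Hfe : voter_score m c y i = fun z => h1 z + (- c) * h2 z).
  { apply functional_extensionality. intro z. unfold voter_score, h1, h2. ring. }
  unfold v. rewrite Hfe. rewrite (integral01_val _ pr).
  unfold pr. rewrite (RiemannInt_P13 pr1 pr2). rewrite E1, E2. unfold Rdiv. ring.
Qed.

Ltac rabs := repeat match goal with |- context [Rabs ?e] =>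
  let H := fresh in destruct (Rcase_abs e) as [H|H];
  [rewrite (Rabs_left e H)|rewrite (Rabs_right e H)] end; lra.

Definition LSpec m (y : nat -> R) a Lend :=
  (exists l, (exists j, (j < m)%nat /\ y j = l) /\ l < a /\
     (forall j, (j < m)%nat -> y j < a -> y j <= l) /\ Lend = (l + a) / 2) \/
  ((forall j, (j < m)%nat -> a <= y j) /\ Lend = 0).

Definition RSpec m (y : nat -> R) a Rend :=
  (exists r, (exists j, (j < m)%nat /\ y j = r) /\ a < r /\
     (forall j, (j < m)%nat -> a < y j -> r <= y j) /\ Rend = (a + r) / 2) \/
  ((forall j, (j < m)%nat -> y j <= a) /\ Rend = 1).

Definition FSpec m (y : nat -> R) a lo hi :=
  ((exists j, (j < m)%nat /\ y j < a) /\ (exists j, (j < m)%nat /\ a < y j) /\ lo = 0 /\ hi = 0)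
  \/ ((forall j, (j < m)%nat -> a <= y j) /\
      (exists mx, (exists j, (j < m)%nat /\ y j = mx) /\ a < mx /\
         (forall j, (j < m)%nat -> y j <= mx) /\ lo = (a + mx) / 2) /\ hi = 1)
  \/ ((forall j, (j < m)%nat -> y j <= a) /\
      (exists mn, (exists j, (j < m)%nat /\ y j = mn) /\ mn < a /\
         (forall j, (j < m)%nat -> mn <= y j) /\ hi = (mn + a) / 2) /\ lo = 0)
  \/ ((forall j, (j < m)%nat -> y j = a) /\ lo = 0 /\ hi = 1).

Lemma vF m c y i Lend Rend lo hi :
  (i < m)%nat -> (forall j, (j < m)%nat -> 0 <= y j <= 1) ->
  LSpec m y (y i) Lend -> RSpec m y (y i) Rend -> FSpec m y (y i) lo hi ->
  v m c y i = (Rend - Lend) / INR (n_at m y (y i)) - c * (hi - lo) / INR (n_at m y (y i)).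
Proof.
  intros Hi Hy HL HR HF.
  set (a := y i) in *.
  assert (Ha : 0 <= a <= 1) by (apply Hy; auto).
  apply vformula.
  - destruct HL as [[l [[j [Hj Hjl]] [Hla [_ ->]]]]|[_ ->]];
    destruct HR as [[r [[j' [Hj' Hjr]] [Har [_ ->]]]]|[_ ->]];
    try (specialize (Hy j Hj)); try (specialize (Hy j' Hj')); subst; lra.
  - destruct HR as [[r [[j' [Hj' Hjr]] [Har [_ ->]]]]|[_ ->]];
    try (specialize (Hy j' Hj')); subst; lra.
  - destruct HF as [[_ [_ [-> ->]]]|[[_ [[mx [[j [Hj Hjm]] [Ham [_ ->]]]] ->]]|[[_ [[mn [[j [Hj Hjm]] [Ham [_ ->]]]] ->]]|[_ [-> ->]]]]];
    try (specialize (Hy j Hj)); subst; lra.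
  - destruct HF as [[_ [_ [-> ->]]]|[[_ [[mx [[j [Hj Hjm]] [Ham [_ ->]]]] ->]]|[[_ [[mn [[j [Hj Hjm]] [Ham [_ ->]]]] ->]]|[_ [-> ->]]]]];
    try (specialize (Hy j Hj)); subst; lra.
  - intros z Hz j Hj Hne. fold a in Hne |- *.
    destruct (Rlt_dec (y j) a) as [Hlt|Hge].
    + destruct HL as [[l [_ [Hla [Hmax ->]]]]|[Hall _]].
      * specialize (Hmax j Hj Hlt). rabs.
      * specialize (Hall j Hj). lra.
    + assert (Hgt : a < y j) by lra.
      destruct HR as [[r [_ [Har [Hmin ->]]]]|[Hall _]].
      * specialize (Hmin j Hj Hgt). rabs.
      * specialize (Hall j Hj). lra.
  - intros z Hz [Hzl|Hzr]; fold a.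
    + destruct HL as [[l [[j [Hj Hjl]] [Hla [_ ->]]]]|[_ ->]]; [|lra].
      exists j. split; auto. rewrite Hjl. rabs.
    + destruct HR as [[r [[j [Hj Hjr]] [Har [_ ->]]]]|[_ ->]]; [|lra].
      exists j. split; auto. rewrite Hjr. rabs.
  - intros z Hz j Hj Hne. fold a in Hne |- *.
    destruct HF as [[_ [_ [-> ->]]]|[[Hall [[mx [_ [Ham [Hmx ->]]]] ->]]|[[Hall [[mn [_ [Ham [Hmn ->]]]] ->]]|[Hall _]]]].
    + lra.
    + specialize (Hall j Hj). specialize (Hmx j Hj). rabs.
    + specialize (Hall j Hj). specialize (Hmn j Hj). rabs.
    + specialize (Hall j Hj). contradiction.
  - intros z Hz Hzo. fold a.
    destruct HF as [[[j1 [Hj1 H1]] [[j2 [Hj2 H2]] [-> ->]]]|[[Hall [[mx [[j [Hj Hjm]] [Ham [Hmx ->]]]] ->]]|[[Hall [[mn [[j [Hj Hjm]] [Ham [Hmn ->]]]] ->]]|[Hall [-> ->]]]]].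
    + destruct (Rle_dec z a).
      * exists j2. split; auto. rabs.
      * exists j1. split; auto. rabs.
    + exists j. split; auto. rewrite Hjm. destruct Hzo; [rabs|lra].
    + exists j. split; auto. rewrite Hjm. destruct Hzo; [lra|rabs].
    + lra.
Qed.

Lemma n_at_S m y a : n_at (S m) y a = (n_at m y a + if Req_EM_T (y m) a then 1 else 0)%nat.
Proof.
  unfold n_at. rewrite seq_S, filter_app, length_app. simpl.
  destruct (Req_EM_T (y m) a); simpl; lia.
Qed.

Lemma n_at_0 y a : n_at 0 y a = 0%nat.
Proof. reflexivity. Qed.

Lemma n_at_ext m y y' a : (forall j, (j < m)%nat -> y j = y' j) -> n_at m y a = n_at m y' a.
Proof.
  induction m; intros H; auto.
  rewrite !n_at_S, IHm by (intros; apply H; lia). rewrite (H m) by lia. reflexivity.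
Qed.

Lemma n_at_ge1 m y a j : (j < m)%nat -> y j = a -> (1 <= n_at m y a)%nat.
Proof.
  induction m; intros Hj Hy; [lia|]. rewrite n_at_S.
  destruct (Nat.eq_dec j m) as [->|].
  - destruct (Req_EM_T (y m) a); [lia|contradiction].
  - specialize (IHm ltac:(lia) Hy). lia.
Qed.

Lemma n_at_ge2 m y a j1 j2 : (j1 < m)%nat -> (j2 < m)%nat -> j1 <> j2 -> y j1 = a -> y j2 = a ->
  (2 <= n_at m y a)%nat.
Proof.
  induction m; intros H1 H2 Hne Hy1 Hy2; [lia|]. rewrite n_at_S.
  destruct (Nat.eq_dec j1 m) as [->|].
  - destruct (Req_EM_T (y m) a); [|contradiction].
    pose proof (n_at_ge1 m y a j2 ltac:(lia) Hy2). lia.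
  - destruct (Nat.eq_dec j2 m) as [->|].
    + destruct (Req_EM_T (y m) a); [|contradiction].
      pose proof (n_at_ge1 m y a j1 ltac:(lia) Hy1). lia.
    + specialize (IHm ltac:(lia) ltac:(lia) Hne Hy1 Hy2). lia.
Qed.

Lemma n_at_le1 m y a i : (forall j, (j < m)%nat -> y j = a -> j = i) -> (n_at m y a <= 1)%nat.
Proof.
  induction m; intros H; [rewrite n_at_0; lia|]. rewrite n_at_S.
  destruct (Req_EM_T (y m) a) as [e|ne].
  - assert (m = i) by (apply H; auto). subst i.
    assert (n_at m y a = 0%nat).
    { clear IHm. assert (forall k, (k <= m)%nat -> n_at k y a = 0%nat) as HH; [|apply HH; lia].
      induction k; intros; auto. rewrite n_at_S, IHk by lia.
      destruct (Req_EM_T (y k) a); auto. assert (k = m) by (apply H; auto; lia). lia. }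
    lia.
  - assert (n_at m y a <= 1)%nat; [apply IHm; intros; apply H; auto|lia].
Qed.

Lemma n_at_other m y a i : (2 <= n_at m y a)%nat ->
  exists j, (j < m)%nat /\ j <> i /\ y j = a.
Proof.
  intros H. destruct (classic (exists j, (j < m)%nat /\ j <> i /\ y j = a)) as [E|E]; auto.
  exfalso. assert (n_at m y a <= 1)%nat; [|lia].
  apply (n_at_le1 m y a i). intros j Hj Hy.
  destruct (Nat.eq_dec j i); auto. exfalso; apply E; eauto.
Qed.

Lemma n_at_one m y a i : (i < m)%nat -> y i = a ->
  (forall j, (j < m)%nat -> j <> i -> y j <> a) -> n_at m y a = 1%nat.
Proof.
  intros Hi Hy H. pose proof (n_at_ge1 m y a i Hi Hy).
  assert (n_at m y a <= 1)%nat; [|lia].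
  apply (n_at_le1 m y a i). intros j Hj Hyj. destruct (Nat.eq_dec j i); auto.
  exfalso; apply (H j); auto.
Qed.

Lemma n_at_dev m x i t : (i < m)%nat -> x i <> t ->
  n_at m (deviate x i t) t = S (n_at m x t).
Proof.
  induction m; intros Hi Hx; [lia|]. rewrite !n_at_S.
  destruct (Nat.eq_dec i m) as [->|].
  - rewrite (n_at_ext m (deviate x m t) x).
    2:{ intros j Hj. unfold deviate. destruct (Nat.eqb_spec j m); [lia|auto]. }
    replace (deviate x m t m) with t by (unfold deviate; rewrite Nat.eqb_refl; auto).
    destruct (Req_EM_T t t); [|congruence]. destruct (Req_EM_T (x m) t); [contradiction|]. lia.
  - rewrite IHm by (auto; lia). unfold deviate.
    destruct (Nat.eqb_spec m i); [lia|]. lia.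
Qed.

Lemma pos_lt m x q pos n : decomposition m x q pos n ->
  forall u w, (1 <= u)%nat -> (u < w)%nat -> (w <= q)%nat -> pos u < pos w.
Proof.
  intros [Hinc _] u w Hu Huw Hw. induction w; [lia|].
  destruct (Nat.eq_dec u w) as [->|].
  - apply Hinc; lia.
  - apply Rlt_trans with (pos w); [apply IHw; lia|apply Hinc; lia].
Qed.

Lemma pos_le m x q pos n : decomposition m x q pos n ->
  forall u w, (1 <= u)%nat -> (u <= w)%nat -> (w <= q)%nat -> pos u <= pos w.
Proof.
  intros H u w H1 H2 H3. destruct (Nat.eq_dec u w) as [->|]; [lra|].
  left; apply (pos_lt m x q pos n H); lia.
Qed.

Lemma pos_inj m x q pos n : decomposition m x q pos n ->
  forall u w, (1 <= u <= q)%nat -> (1 <= w <= q)%nat -> pos u = pos w -> u = w.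
Proof.
  intros H u w Hu Hw E. destruct (Nat.lt_total u w) as [l|[e|l]]; auto.
  - pose proof (pos_lt _ _ _ _ _ H u w ltac:(lia) l ltac:(lia)); lra.
  - pose proof (pos_lt _ _ _ _ _ H w u ltac:(lia) l ltac:(lia)); lra.
Qed.

Lemma pos_01 m x q pos n : is_profile m x -> decomposition m x q pos n ->
  forall k, (1 <= k <= q)%nat -> 0 <= pos k <= 1.
Proof.
  intros Hx [_ [_ [H3 _]]] k Hk. destruct (H3 k Hk) as [j [Hj E]]. rewrite <- E. apply Hx; auto.
Qed.

Lemma x_pos m x q pos n : decomposition m x q pos n ->
  forall j, (j < m)%nat -> exists k, (1 <= k <= q)%nat /\ x j = pos k.
Proof. intros [_ [H2 _]]; auto. Qed.

Lemma pos_wit m x q pos n : decomposition m x q pos n ->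
  forall k, (1 <= k <= q)%nat -> exists j, (j < m)%nat /\ x j = pos k.
Proof. intros [_ [_ [H3 _]]]; auto. Qed.

Lemma n_eq m x q pos n : decomposition m x q pos n ->
  forall k, (1 <= k <= q)%nat -> n k = n_at m x (pos k).
Proof. intros [_ [_ [_ H4]]]; auto. Qed.

Lemma x_below m x q pos n : decomposition m x q pos n ->
  forall j k, (j < m)%nat -> (1 <= k <= q)%nat -> x j < pos k -> (2 <= k)%nat /\ x j <= pos (k - 1)%nat.
Proof.
  intros H j k Hj Hk Hlt. destruct (x_pos _ _ _ _ _ H j Hj) as [k' [Hk' E]]. rewrite E in *.
  destruct (Nat.lt_ge_cases k' k).
  - split; [lia|]. apply (pos_le _ _ _ _ _ H); lia.
  - pose proof (pos_le _ _ _ _ _ H k k' ltac:(lia) H0 ltac:(lia)). lra.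
Qed.

Lemma x_above m x q pos n : decomposition m x q pos n ->
  forall j k, (j < m)%nat -> (1 <= k <= q)%nat -> pos k < x j -> (k < q)%nat /\ pos (S k) <= x j.
Proof.
  intros H j k Hj Hk Hlt. destruct (x_pos _ _ _ _ _ H j Hj) as [k' [Hk' E]]. rewrite E in *.
  destruct (Nat.lt_ge_cases k k').
  - split; [lia|]. apply (pos_le _ _ _ _ _ H); lia.
  - pose proof (pos_le _ _ _ _ _ H k' k ltac:(lia) H0 ltac:(lia)). lra.
Qed.

Lemma x_ge1 m x q pos n : decomposition m x q pos n -> (1 <= q)%nat ->
  forall j, (j < m)%nat -> pos 1%nat <= x j.
Proof.
  intros H Hq j Hj. destruct (x_pos _ _ _ _ _ H j Hj) as [k' [Hk' E]]. rewrite E.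
  apply (pos_le _ _ _ _ _ H); lia.
Qed.

Lemma x_leq m x q pos n : decomposition m x q pos n -> (1 <= q)%nat ->
  forall j, (j < m)%nat -> x j <= pos q.
Proof.
  intros H Hq j Hj. destruct (x_pos _ _ _ _ _ H j Hj) as [k' [Hk' E]]. rewrite E.
  apply (pos_le _ _ _ _ _ H); lia.
Qed.

Lemma Vx1 m c x q pos n i : is_profile m x -> decomposition m x q pos n -> (2 <= q)%nat ->
  (i < m)%nat -> x i = pos 1%nat ->
  v m c x i = ((pos 1%nat + pos 2%nat) / 2 - c * (1 - (pos 1%nat + pos q) / 2)) / INR (n 1%nat).
Proof.
  intros Hx H Hq Hi Ei.
  rewrite (vF m c x i 0 ((pos 1%nat + pos 2%nat)/2) ((pos 1%nat + pos q)/2) 1); auto.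
  - rewrite Ei, (n_eq _ _ _ _ _ H 1%nat) by lia. unfold Rdiv. ring.
  - right. split; auto. intros j Hj. rewrite Ei. apply (x_ge1 _ _ _ _ _ H); auto; lia.
  - left. exists (pos 2%nat). rewrite Ei. repeat split.
    + apply (pos_wit _ _ _ _ _ H); lia.
    + apply (pos_lt _ _ _ _ _ H); lia.
    + intros j Hj Hlt. apply (x_above _ _ _ _ _ H j 1%nat Hj ltac:(lia) Hlt).
  - right; left. rewrite Ei. split; [intros j Hj; apply (x_ge1 _ _ _ _ _ H); auto; lia|].
    split; auto. exists (pos q). repeat split.
    + apply (pos_wit _ _ _ _ _ H); lia.
    + apply (pos_lt _ _ _ _ _ H); lia.
    + intros j Hj; apply (x_leq _ _ _ _ _ H); auto; lia.
Qed.

Lemma Vxq m c x q pos n i : is_profile m x -> decomposition m x q pos n -> (2 <= q)%nat ->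
  (i < m)%nat -> x i = pos q ->
  v m c x i = ((1 - (pos (q - 1)%nat + pos q) / 2) - c * ((pos 1%nat + pos q) / 2)) / INR (n q).
Proof.
  intros Hx H Hq Hi Ei.
  rewrite (vF m c x i ((pos (q-1)%nat + pos q)/2) 1 0 ((pos 1%nat + pos q)/2)); auto.
  - rewrite Ei, (n_eq _ _ _ _ _ H q) by lia. unfold Rdiv. ring.
  - left. exists (pos (q-1)%nat). rewrite Ei. repeat split.
    + apply (pos_wit _ _ _ _ _ H); lia.
    + apply (pos_lt _ _ _ _ _ H); lia.
    + intros j Hj Hlt. apply (x_below _ _ _ _ _ H j q Hj ltac:(lia) Hlt).
  - right. split; auto. intros j Hj. rewrite Ei. apply (x_leq _ _ _ _ _ H); auto; lia.
  - right; right; left. rewrite Ei. split; [intros j Hj; apply (x_leq _ _ _ _ _ H); auto; lia|].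
    split; auto. exists (pos 1%nat). repeat split.
    + apply (pos_wit _ _ _ _ _ H); lia.
    + apply (pos_lt _ _ _ _ _ H); lia.
    + intros j Hj; apply (x_ge1 _ _ _ _ _ H); auto; lia.
Qed.

Lemma Vxk m c x q pos n i k : is_profile m x -> decomposition m x q pos n ->
  (1 < k)%nat -> (k < q)%nat -> (i < m)%nat -> x i = pos k ->
  v m c x i = ((pos (S k) - pos (k - 1)%nat) / 2) / INR (n k).
Proof.
  intros Hx H Hk1 Hkq Hi Ei.
  rewrite (vF m c x i ((pos (k-1)%nat + pos k)/2) ((pos k + pos (S k))/2) 0 0); auto.
  - rewrite Ei, (n_eq _ _ _ _ _ H k) by lia. unfold Rdiv. ring.
  - left. exists (pos (k-1)%nat). rewrite Ei. repeat split.
    + apply (pos_wit _ _ _ _ _ H); lia.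
    + apply (pos_lt _ _ _ _ _ H); lia.
    + intros j Hj Hlt. apply (x_below _ _ _ _ _ H j k Hj ltac:(lia) Hlt).
  - left. exists (pos (S k)). rewrite Ei. repeat split.
    + apply (pos_wit _ _ _ _ _ H); lia.
    + apply (pos_lt _ _ _ _ _ H); lia.
    + intros j Hj Hlt. apply (x_above _ _ _ _ _ H j k Hj ltac:(lia) Hlt).
  - left. rewrite Ei. split; [|split; auto].
    + destruct (pos_wit _ _ _ _ _ H 1%nat ltac:(lia)) as [j [Hj E]]. exists j. split; auto.
      rewrite E. apply (pos_lt _ _ _ _ _ H); lia.
    + destruct (pos_wit _ _ _ _ _ H q ltac:(lia)) as [j [Hj E]]. exists j. split; auto.
      rewrite E. apply (pos_lt _ _ _ _ _ H); lia.
Qed.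

Lemma ex_max (P : nat -> Prop) (f : nat -> R) m : (exists j, (j < m)%nat /\ P j) ->
  exists j0, (j0 < m)%nat /\ P j0 /\ forall j, (j < m)%nat -> P j -> f j <= f j0.
Proof.
  induction m; intros [j [Hj Pj]]; [lia|].
  destruct (classic (exists j, (j < m)%nat /\ P j)) as [E|E].
  - destruct (IHm E) as [j0 [H0 [P0 M0]]].
    destruct (classic (P m)) as [Pm|Pm].
    + destruct (Rle_dec (f m) (f j0)).
      * exists j0. repeat split; auto. intros k Hk Pk.
        destruct (Nat.eq_dec k m) as [->|]; auto. apply M0; auto; lia.
      * exists m. repeat split; auto. intros k Hk Pk.
        destruct (Nat.eq_dec k m) as [->|]; [lra|]. specialize (M0 k ltac:(lia) Pk). lra.
    + exists j0. repeat split; auto. intros k Hk Pk.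
      destruct (Nat.eq_dec k m) as [->|]; [contradiction|]. apply M0; auto; lia.
  - assert (j = m). { destruct (Nat.eq_dec j m); auto. exfalso; apply E; exists j; split; auto; lia. }
    subst. exists m. repeat split; auto. intros k Hk Pk.
    destruct (Nat.eq_dec k m) as [->|]; [lra|]. exfalso; apply E; exists k; split; auto; lia.
Qed.

Lemma ex_min (P : nat -> Prop) (f : nat -> R) m : (exists j, (j < m)%nat /\ P j) ->
  exists j0, (j0 < m)%nat /\ P j0 /\ forall j, (j < m)%nat -> P j -> f j0 <= f j.
Proof.
  intros H. destruct (ex_max P (fun j => - f j) m H) as [j0 [H1 [H2 H3]]].
  exists j0. repeat split; auto. intros j Hj Pj. specialize (H3 j Hj Pj). lra.
Qed.

Lemma dev_i x i t : deviate x i t i = t.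
Proof. unfold deviate. rewrite Nat.eqb_refl. auto. Qed.

Lemma dev_j x i t j : j <> i -> deviate x i t j = x j.
Proof. intros H. unfold deviate. destruct (Nat.eqb_spec j i); auto; lia. Qed.

Lemma dev_prof m x i t : is_profile m x -> 0 <= t <= 1 ->
  forall j, (j < m)%nat -> 0 <= deviate x i t j <= 1.
Proof.
  intros Hx Ht j Hj. destruct (Nat.eq_dec j i) as [->|]; [rewrite dev_i; auto|rewrite dev_j; auto].
Qed.

Definition other m i j := (j < m)%nat /\ j <> i.

Lemma DevInt m c x i t l r : is_profile m x -> (i < m)%nat -> 0 <= t <= 1 -> l < t < r ->
  (exists j, other m i j /\ x j = l) -> (exists j, other m i j /\ x j = r) ->
  (forall j, other m i j -> x j < t -> x j <= l) ->
  (forall j, other m i j -> t < x j -> r <= x j) ->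
  v m c (deviate x i t) i = ((r - l) / 2) / INR (n_at m (deviate x i t) t).
Proof.
  intros Hx Hi Ht Hlr [jl [[Hjl Hjl'] El]] [jr [[Hjr Hjr'] Er]] Hmax Hmin.
  rewrite (vF m c (deviate x i t) i ((l + t)/2) ((t + r)/2) 0 0); auto.
  - rewrite dev_i. unfold Rdiv. ring.
  - apply dev_prof; auto.
  - left. exists l. rewrite dev_i. repeat split; try lra.
    + exists jl. rewrite dev_j; auto.
    + intros j Hj Hlt. destruct (Nat.eq_dec j i) as [->|Hne]; [rewrite dev_i in Hlt; lra|].
      rewrite dev_j in * by auto. apply Hmax; [split|]; auto.
  - left. exists r. rewrite dev_i. repeat split; try lra.
    + exists jr. rewrite dev_j; auto.
    + intros j Hj Hlt. destruct (Nat.eq_dec j i) as [->|Hne]; [rewrite dev_i in Hlt; lra|].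
      rewrite dev_j in * by auto. apply Hmin; [split|]; auto.
  - left. rewrite dev_i. repeat split; auto.
    + exists jl. rewrite dev_j; auto. split; auto; lra.
    + exists jr. rewrite dev_j; auto. split; auto; lra.
Qed.

Lemma DevLeft m c x i t r mx : is_profile m x -> (i < m)%nat -> 0 <= t <= 1 -> t < r -> t < mx ->
  (forall j, other m i j -> t <= x j) ->
  (exists j, other m i j /\ x j = r) ->
  (forall j, other m i j -> t < x j -> r <= x j) ->
  (exists j, other m i j /\ x j = mx) ->
  (forall j, other m i j -> x j <= mx) ->
  v m c (deviate x i t) i = ((t + r) / 2 - c * (1 - (t + mx) / 2)) / INR (n_at m (deviate x i t) t).
Proof.
  intros Hx Hi Ht Htr Htm Hall [jr [[Hjr Hjr'] Er]] Hmin [jm [[Hjm Hjm'] Em]] Hmx.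
  rewrite (vF m c (deviate x i t) i 0 ((t + r)/2) ((t + mx)/2) 1); auto.
  - rewrite dev_i. unfold Rdiv. ring.
  - apply dev_prof; auto.
  - right. rewrite dev_i. split; auto. intros j Hj.
    destruct (Nat.eq_dec j i) as [->|Hne]; [rewrite dev_i; lra|]. rewrite dev_j by auto. apply Hall; split; auto.
  - left. exists r. rewrite dev_i. repeat split; try lra.
    + exists jr. rewrite dev_j; auto.
    + intros j Hj Hlt. destruct (Nat.eq_dec j i) as [->|Hne]; [rewrite dev_i in Hlt; lra|].
      rewrite dev_j in * by auto. apply Hmin; [split|]; auto.
  - right; left. rewrite dev_i. split; [|split; auto].
    + intros j Hj. destruct (Nat.eq_dec j i) as [->|Hne]; [rewrite dev_i; lra|]. rewrite dev_j by auto. apply Hall; split; auto.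
    + exists mx. repeat split; auto.
      * exists jm. rewrite dev_j; auto.
      * intros j Hj. destruct (Nat.eq_dec j i) as [->|Hne]; [rewrite dev_i; lra|]. rewrite dev_j by auto. apply Hmx; split; auto.
Qed.

Lemma DevRight m c x i t l mn : is_profile m x -> (i < m)%nat -> 0 <= t <= 1 -> l < t -> mn < t ->
  (forall j, other m i j -> x j <= t) ->
  (exists j, other m i j /\ x j = l) ->
  (forall j, other m i j -> x j < t -> x j <= l) ->
  (exists j, other m i j /\ x j = mn) ->
  (forall j, other m i j -> mn <= x j) ->
  v m c (deviate x i t) i = ((1 - (l + t) / 2) - c * ((mn + t) / 2)) / INR (n_at m (deviate x i t) t).
Proof.
  intros Hx Hi Ht Htr Htm Hall [jr [[Hjr Hjr'] Er]] Hmax [jm [[Hjm Hjm'] Em]] Hmn.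
  rewrite (vF m c (deviate x i t) i ((l + t)/2) 1 0 ((mn + t)/2)); auto.
  - rewrite dev_i. unfold Rdiv. ring.
  - apply dev_prof; auto.
  - left. exists l. rewrite dev_i. repeat split; try lra.
    + exists jr. rewrite dev_j; auto.
    + intros j Hj Hlt. destruct (Nat.eq_dec j i) as [->|Hne]; [rewrite dev_i in Hlt; lra|].
      rewrite dev_j in * by auto. apply Hmax; [split|]; auto.
  - right. rewrite dev_i. split; auto. intros j Hj.
    destruct (Nat.eq_dec j i) as [->|Hne]; [rewrite dev_i; lra|]. rewrite dev_j by auto. apply Hall; split; auto.
  - right; right; left. rewrite dev_i. split; [|split; auto].
    + intros j Hj. destruct (Nat.eq_dec j i) as [->|Hne]; [rewrite dev_i; lra|]. rewrite dev_j by auto. apply Hall; split; auto.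
    + exists mn. repeat split; auto.
      * exists jm. rewrite dev_j; auto.
      * intros j Hj. destruct (Nat.eq_dec j i) as [->|Hne]; [rewrite dev_i; lra|]. rewrite dev_j by auto. apply Hmn; split; auto.
Qed.

Lemma N_dev_one m x i t : (i < m)%nat -> (forall j, other m i j -> x j <> t) ->
  n_at m (deviate x i t) t = 1%nat.
Proof.
  intros Hi H. apply (n_at_one m _ t i Hi (dev_i x i t)). intros j Hj Hne.
  rewrite dev_j by auto. apply H; split; auto.
Qed.

Lemma N_dev_ge2 m x i t j : (i < m)%nat -> other m i j -> x j = t ->
  (2 <= n_at m (deviate x i t) t)%nat.
Proof.
  intros Hi [Hj Hne] E. apply (n_at_ge2 m _ t i j); auto. apply dev_i. rewrite dev_j; auto.
Qed.

Lemma dev_self x i : deviate x i (x i) = x.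
Proof.
  apply functional_extensionality. intro j. unfold deviate.
  destruct (Nat.eqb_spec j i); subst; auto.
Qed.

Lemma INR1 : INR 1 = 1. Proof. reflexivity. Qed.
Lemma INR2 : INR 2 = 2. Proof. simpl; lra. Qed.
Lemma INR3 : INR 3 = 3. Proof. simpl; lra. Qed.

Lemma div_ge2 X a : 0 <= X -> 2 <= a -> X / a <= X / 2.
Proof.
  intros HX Ha. unfold Rdiv. apply Rmult_le_compat_l; auto.
  apply Rinv_le_contravar; lra.
Qed.

Lemma n_ge1 m x q pos n k : decomposition m x q pos n -> (1 <= k <= q)%nat -> (1 <= n k)%nat.
Proof.
  intros H Hk. rewrite (n_eq _ _ _ _ _ H k Hk). destruct (pos_wit _ _ _ _ _ H k Hk) as [j [Hj E]].
  apply (n_at_ge1 m x _ j); auto.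
Qed.

Lemma other_at m x q pos n i k : decomposition m x q pos n -> (1 <= k <= q)%nat -> (2 <= n k)%nat ->
  exists j, other m i j /\ x j = pos k.
Proof.
  intros H Hk Hn. rewrite (n_eq _ _ _ _ _ H k Hk) in Hn.
  destruct (n_at_other m x (pos k) i Hn) as [j [Hj [Hne E]]]. exists j; repeat split; auto.
Qed.

Lemma other_at' m x q pos n i k k' : decomposition m x q pos n -> (1 <= k <= q)%nat -> (1 <= k' <= q)%nat ->
  x i = pos k' -> k <> k' -> exists j, other m i j /\ x j = pos k.
Proof.
  intros H Hk Hk' Ei Hne. destruct (pos_wit _ _ _ _ _ H k Hk) as [j [Hj E]]. exists j. repeat split; auto.
  intros ->. apply Hne. apply (pos_inj _ _ _ _ _ H); auto. congruence.
Qed.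

Lemma bwd m c x q pos n (Hm : (2 <= m)%nat) (Hc : 0 <= c < 1)
  (Hx : is_profile m x) (Hdec : decomposition m x q pos n) (Hq : (2 <= q)%nat)
  (Hn1 : n 1%nat = 2%nat) (Hnq : n q = 2%nat) (Hnle : forall k, (1 <= k <= q)%nat -> (n k <= 2)%nat)
  (HE1 : pos 1%nat = (pos 2%nat - pos 1%nat) / 2 + c / 2)
  (HEq : 1 - pos q = (pos 2%nat - pos 1%nat) / 2 + c / 2)
  (HLq : (pos q - pos (q - 1)%nat) / 2 = (pos 2%nat - pos 1%nat) / 2)
  (Hpair : forall k, (1 < k)%nat -> (k < q)%nat -> n k = 2%nat ->
     (pos k - pos (k - 1)%nat) / 2 = (pos 2%nat - pos 1%nat) / 2 /\
     (pos (S k) - pos k) / 2 = (pos 2%nat - pos 1%nat) / 2)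
  (Hsing : forall k, (1 < k)%nat -> (k < q)%nat -> n k = 1%nat ->
     (pos 2%nat - pos 1%nat) / 2 <= (pos (S k) - pos (k - 1)%nat) / 2)
  (Hhalf : forall u, (1 <= u)%nat -> (u < q)%nat -> (pos (S u) - pos u) / 2 <= (pos 2%nat - pos 1%nat) / 2) :
  is_NE m c x.
Proof.
  set (Ip := (pos 2%nat - pos 1%nat) / 2) in *.
  assert (Hp12 : pos 1%nat < pos 2%nat) by (apply (pos_lt _ _ _ _ _ Hdec); lia).
  assert (HIp : 0 < Ip) by (unfold Ip; lra).
  assert (Hp1q : pos 1%nat < pos q) by (apply (pos_lt _ _ _ _ _ Hdec); lia).
  assert (Hpq : pos q = 1 - pos 1%nat) by lra.
  assert (Wge : forall i, (i < m)%nat -> Ip <= v m c x i).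
  { intros i Hi. destruct (x_pos _ _ _ _ _ Hdec i Hi) as [k [Hk Ek]].
    destruct (Nat.eq_dec k 1) as [->|Hk1].
    { rewrite (Vx1 m c x q pos n i Hx Hdec Hq Hi Ek), Hn1, INR2, Hpq. unfold Ip in *. lra. }
    destruct (Nat.eq_dec k q) as [->|Hkq].
    { rewrite (Vxq m c x q pos n i Hx Hdec Hq Hi Ek), Hnq, INR2. rewrite Hpq at 2. unfold Ip in *. lra. }
    rewrite (Vxk m c x q pos n i k Hx Hdec ltac:(lia) ltac:(lia) Hi Ek).
    pose proof (Hnle k Hk). pose proof (n_ge1 _ _ _ _ _ k Hdec Hk).
    destruct (Nat.eq_dec (n k) 1) as [E|E].
    - rewrite E, INR1. specialize (Hsing k ltac:(lia) ltac:(lia) E). lra.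
    - assert (E2 : n k = 2%nat) by lia. rewrite E2, INR2.
      destruct (Hpair k ltac:(lia) ltac:(lia) E2). replace (S k - 1)%nat with k by lia. lra. }
  assert (G : forall i l r, (i < m)%nat -> l < r ->
     (exists j, other m i j /\ x j = l) -> (exists j, other m i j /\ x j = r) ->
     (forall j, other m i j -> x j <= l \/ r <= x j) -> (r - l) / 2 <= v m c x i).
  { intros i l r Hi Hlr [jl [[Hjl Hjl'] El]] [jr [[Hjr Hjr'] Er]] Hno.
    destruct (x_pos _ _ _ _ _ Hdec jl Hjl) as [u [Hu Eu]].
    destruct (x_pos _ _ _ _ _ Hdec jr Hjr) as [w [Hw Ew]].
    assert (Huw : (u < w)%nat).
    { destruct (Nat.lt_ge_cases u w); auto.
      pose proof (pos_le _ _ _ _ _ Hdec w u ltac:(lia) H ltac:(lia)). lra. }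
    destruct (Nat.eq_dec w (S u)) as [->|Hw2].
    { pose proof (Hhalf u ltac:(lia) ltac:(lia)). pose proof (Wge i Hi). lra. }
    destruct (pos_wit _ _ _ _ _ Hdec (S u) ltac:(lia)) as [j0 [Hj0 E0]].
    assert (Hb0 : l < pos (S u) < r).
    { subst l r. rewrite Eu, Ew. split; apply (pos_lt _ _ _ _ _ Hdec); lia. }
    destruct (Nat.eq_dec j0 i) as [->|Hne0].
    2:{ destruct (Hno j0) as [A|A]; [split; auto|lra|lra]. }
    destruct (Nat.eq_dec w (S (S u))) as [->|Hw3].
    2:{ destruct (pos_wit _ _ _ _ _ Hdec (S (S u)) ltac:(lia)) as [j1 [Hj1 E1]].
        assert (Hb1 : l < pos (S (S u)) < r).
        { subst l r. rewrite Eu, Ew. split; apply (pos_lt _ _ _ _ _ Hdec); lia. }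
        destruct (Nat.eq_dec j1 i) as [->|Hne1].
        - pose proof (pos_lt _ _ _ _ _ Hdec (S u) (S (S u)) ltac:(lia) ltac:(lia) ltac:(lia)). lra.
        - destruct (Hno j1) as [A|A]; [split; auto|lra|lra]. }
    assert (Hnk : n (S u) = 1%nat).
    { pose proof (n_ge1 _ _ _ _ _ (S u) Hdec ltac:(lia)).
      destruct (Nat.eq_dec (n (S u)) 1); auto. exfalso.
      destruct (other_at m x q pos n i (S u) Hdec ltac:(lia) ltac:(lia)) as [j2 [Ho2 E2]].
      destruct (Hno j2 Ho2); lra. }
    rewrite (Vxk m c x q pos n i (S u) Hx Hdec ltac:(lia) ltac:(lia) Hi E0), Hnk, INR1.
    replace (S u - 1)%nat with u by lia. rewrite <- El, <- Er, Eu, Ew. lra. }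
  assert (Oge : forall j, (j < m)%nat -> pos 1%nat <= x j) by (intros; apply (x_ge1 _ _ _ _ _ Hdec); auto; lia).
  assert (Ole : forall j, (j < m)%nat -> x j <= pos q) by (intros; apply (x_leq _ _ _ _ _ Hdec); auto; lia).
  split; auto.
  intros i Hi t Ht.
  pose proof (Wge i Hi) as HW.
  assert (O1 : exists j, other m i j /\ x j = pos 1%nat) by (apply (other_at _ _ _ _ _ i 1 Hdec); lia).
  assert (Oq : exists j, other m i j /\ x j = pos q) by (apply (other_at _ _ _ _ _ i q Hdec); lia).
  destruct (Req_dec t (x i)) as [->|Hti].
  { rewrite dev_self. lra. }
  destruct (Rtotal_order t (pos 1%nat)) as [Hlt1|[He1|Hgt1]].
  -
    rewrite (DevLeft m c x i t (pos 1%nat) (pos q) Hx Hi Ht Hlt1 ltac:(lra)).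
    + rewrite N_dev_one, INR1; auto.
      * assert (c * (pos 1%nat - t) >= 0) by (apply Rle_ge, Rmult_le_pos; lra). rewrite Hpq. lra.
      * intros j [Hj _]. specialize (Oge j Hj). lra.
    + intros j [Hj _]. specialize (Oge j Hj). lra.
    + auto.
    + intros j [Hj _] _. auto.
    + auto.
    + intros j [Hj _]. auto.
  -
    subst t.
    destruct (ex_min (fun j => other m i j /\ pos 1%nat < x j) x m) as [jr [Hjr [[Ojr Gjr] Mjr]]].
    { destruct Oq as [j [[Hj Hj'] E]]. exists j. split; auto. repeat split; auto. lra. }
    rewrite (DevLeft m c x i (pos 1%nat) (x jr) (pos q) Hx Hi Ht Gjr Hp1q).
    + rewrite n_at_dev by (auto; lra). rewrite <- (n_eq _ _ _ _ _ Hdec 1%nat) by lia. rewrite Hn1, INR3.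
      assert (HG : (x jr - pos 1%nat) / 2 <= v m c x i).
      { apply G; auto. exists jr; auto.
        intros j Oj. destruct (Rle_dec (x j) (pos 1%nat)); [left; auto|right].
        apply Mjr; [apply Oj|]. split; auto; lra. }
      rewrite Hpq. lra.
    + intros j [Hj _]. auto.
    + exists jr; auto.
    + intros j Oj Hlt. apply Mjr; [apply Oj|]. split; auto.
    + auto.
    + intros j [Hj _]. auto.
  - destruct (Rtotal_order t (pos q)) as [Hltq|[Heq|Hgtq]].
    +
      destruct (ex_max (fun j => other m i j /\ x j < t) x m) as [jl [Hjl [[Ojl Ljl] Mjl]]].
      { destruct O1 as [j [[Hj Hj'] E]]. exists j. split; auto. repeat split; auto. lra. }
      destruct (ex_min (fun j => other m i j /\ t < x j) x m) as [jr [Hjr [[Ojr Gjr] Mjr]]].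
      { destruct Oq as [j [[Hj Hj'] E]]. exists j. split; auto. repeat split; auto. lra. }
      rewrite (DevInt m c x i t (x jl) (x jr) Hx Hi Ht ltac:(lra)).
      2: exists jl; auto.
      2: exists jr; auto.
      2: intros j Oj Hlt; apply Mjl; [apply Oj|split; auto].
      2: intros j Oj Hlt; apply Mjr; [apply Oj|split; auto].
      destruct (classic (exists j, other m i j /\ x j = t)) as [[j0 [Oj0 E0]]|NE].
      * pose proof (N_dev_ge2 m x i t j0 Hi Oj0 E0) as HN.
        assert (HG1 : (t - x jl) / 2 <= v m c x i).
        { apply G; auto. exists jl; auto. exists j0; auto.
          intros j Oj. destruct (Rlt_dec (x j) t); [left; apply Mjl; [apply Oj|split; auto]|right; lra]. }
        assert (HG2 : (x jr - t) / 2 <= v m c x i).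
        { apply G; auto. exists j0; auto. exists jr; auto.
          intros j Oj. destruct (Rlt_dec t (x j)); [right; apply Mjr; [apply Oj|split; auto]|left; lra]. }
        apply le_INR in HN. rewrite INR2 in HN.
        pose proof (div_ge2 ((x jr - x jl) / 2) _ ltac:(lra) HN). lra.
      * rewrite N_dev_one, INR1; auto.
        2:{ intros j Oj E. apply NE; eauto. }
        assert (HG : (x jr - x jl) / 2 <= v m c x i).
        { apply G; auto; [lra|exists jl; auto|exists jr; auto|].
          intros j Oj. destruct (Rlt_dec (x j) t).
          - left; apply Mjl; [apply Oj|split; auto].
          - destruct (Req_dec (x j) t). { exfalso; apply NE; eauto. }
            right; apply Mjr; [apply Oj|split; auto; lra]. }
        lra.
    +
      subst t.
      destruct (ex_max (fun j => other m i j /\ x j < pos q) x m) as [jl [Hjl [[Ojl Ljl] Mjl]]].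
      { destruct O1 as [j [[Hj Hj'] E]]. exists j. split; auto. repeat split; auto. lra. }
      rewrite (DevRight m c x i (pos q) (x jl) (pos 1%nat) Hx Hi Ht Ljl Hp1q).
      * rewrite n_at_dev by (auto; lra). rewrite <- (n_eq _ _ _ _ _ Hdec q) by lia. rewrite Hnq, INR3.
        assert (HG : (pos q - x jl) / 2 <= v m c x i).
        { apply G; auto. exists jl; auto.
          intros j Oj. destruct (Rle_dec (pos q) (x j)); [right; auto|left].
          apply Mjl; [apply Oj|]. split; auto; lra. }
        replace ((pos 1%nat + pos q) / 2) with (1/2) by lra. lra.
      * intros j [Hj _]. auto.
      * exists jl; auto.
      * intros j Oj Hlt. apply Mjl; [apply Oj|]. split; auto.
      * auto.
      * intros j [Hj _]. auto.
    +
      rewrite (DevRight m c x i t (pos q) (pos 1%nat) Hx Hi Ht Hgtq ltac:(lra)).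
      * rewrite N_dev_one, INR1; auto.
        -- assert (c * (t - pos q) >= 0) by (apply Rle_ge, Rmult_le_pos; lra). rewrite Hpq in *. lra.
        -- intros j [Hj _]. specialize (Ole j Hj). lra.
      * intros j [Hj _]. specialize (Ole j Hj). lra.
      * auto.
      * intros j [Hj _] _. auto.
      * auto.
      * intros j [Hj _]. auto.
Qed.

Lemma n1_unique m x q pos n k i j : decomposition m x q pos n -> (1 <= k <= q)%nat -> n k = 1%nat ->
  (i < m)%nat -> (j < m)%nat -> x i = pos k -> x j = pos k -> j = i.
Proof.
  intros H Hk Hn Hi Hj Ei Ej. destruct (Nat.eq_dec j i); auto. exfalso.
  pose proof (n_at_ge2 m x (pos k) j i Hj Hi n0 Ej Ei).
  rewrite <- (n_eq _ _ _ _ _ H k Hk) in H0. lia.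
Qed.

Lemma GapDev m c x q pos n i u : is_profile m x -> decomposition m x q pos n -> (i < m)%nat ->
  (1 <= u)%nat -> (u < q)%nat ->
  (exists j, other m i j /\ x j = pos u) -> (exists j, other m i j /\ x j = pos (S u)) ->
  v m c (deviate x i ((pos u + pos (S u)) / 2)) i = (pos (S u) - pos u) / 2.
Proof.
  intros Hx H Hi Hu Huq Ol Or.
  assert (Hlt : pos u < pos (S u)) by (apply (pos_lt _ _ _ _ _ H); lia).
  pose proof (pos_01 _ _ _ _ _ Hx H u ltac:(lia)). pose proof (pos_01 _ _ _ _ _ Hx H (S u) ltac:(lia)).
  rewrite (DevInt m c x i ((pos u + pos (S u)) / 2) (pos u) (pos (S u)) Hx Hi ltac:(lra) ltac:(lra) Ol Or).
  - rewrite N_dev_one, INR1; auto. { field. }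
    intros j [Hj _] E. destruct (Rlt_dec (x j) (pos (S u))).
    + destruct (x_below _ _ _ _ _ H j (S u) Hj ltac:(lia) r) as [_ A].
      replace (S u - 1)%nat with u in A by lia. lra.
    + destruct (Rle_dec (pos (S u)) (x j)); lra.
  - intros j [Hj _] Hl. destruct (x_below _ _ _ _ _ H j (S u) Hj ltac:(lia) ltac:(lra)) as [_ A].
    replace (S u - 1)%nat with u in A by lia. lra.
  - intros j [Hj _] Hl. destruct (x_above _ _ _ _ _ H j u Hj ltac:(lia) ltac:(lra)) as [_ A]. lra.
Qed.

Lemma LeftLim m c x q pos n i V : (0 <= c) -> is_profile m x -> decomposition m x q pos n -> (2 <= q)%nat ->
  (i < m)%nat -> 0 <= V ->
  (exists j, other m i j /\ x j = pos 1%nat) -> (exists j, other m i j /\ x j = pos q) ->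
  (forall t, 0 <= t <= 1 -> v m c (deviate x i t) i <= V) ->
  pos 1%nat - c * (1 - (pos 1%nat + pos q) / 2) <= V.
Proof.
  intros Hc Hx H Hq Hi HV O1 Oq NE.
  assert (Hp1q : pos 1%nat < pos q) by (apply (pos_lt _ _ _ _ _ H); lia).
  pose proof (pos_01 _ _ _ _ _ Hx H 1 ltac:(lia)). pose proof (pos_01 _ _ _ _ _ Hx H q ltac:(lia)).
  assert (Hc1 : c * (1 - (pos 1%nat + pos q) / 2) >= 0) by (apply Rle_ge, Rmult_le_pos; lra).
  destruct (Req_dec (pos 1%nat) 0) as [E0|Hp].
  { lra. }
  set (A := pos 1%nat - c * (1 - (pos 1%nat + pos q) / 2)).
  destruct (Rle_dec A V) as [|HAV]; auto. exfalso.
  set (d := Rmin (pos 1%nat) ((A - V) / (1 + c))).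
  assert (Hd1 : d <= pos 1%nat) by apply Rmin_l.
  assert (Hd2 : d <= (A - V) / (1 + c)) by apply Rmin_r.
  assert (Hdp : 0 < d).
  { unfold d. apply Rmin_pos; [lra|]. apply Rdiv_lt_0_compat; lra. }
  assert (Hcd : (1 + c) * d <= A - V).
  { apply Rmult_le_compat_l with (r := 1 + c) in Hd2; [|lra].
    replace ((1 + c) * ((A - V) / (1 + c))) with (A - V) in Hd2 by (field; lra). auto. }
  set (t := pos 1%nat - d).
  specialize (NE t ltac:(unfold t; lra)).
  rewrite (DevLeft m c x i t (pos 1%nat) (pos q) Hx Hi ltac:(unfold t; lra) ltac:(unfold t; lra) ltac:(unfold t; lra)) in NE.
  - rewrite N_dev_one, INR1 in NE; auto.
    + assert (Ev : ((t + pos 1%nat) / 2 - c * (1 - (t + pos q) / 2)) / 1 = A - (1 + c) * d / 2)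
        by (unfold t, A; field).
      rewrite Ev in NE. lra.
    + intros j [Hj _]. pose proof (x_ge1 _ _ _ _ _ H ltac:(lia) j Hj). unfold t; lra.
  - intros j [Hj _]. pose proof (x_ge1 _ _ _ _ _ H ltac:(lia) j Hj). unfold t; lra.
  - auto.
  - intros j [Hj _] _. apply (x_ge1 _ _ _ _ _ H); auto; lia.
  - auto.
  - intros j [Hj _]. apply (x_leq _ _ _ _ _ H); auto; lia.
Qed.

Lemma RightLim m c x q pos n i V : (0 <= c) -> is_profile m x -> decomposition m x q pos n -> (2 <= q)%nat ->
  (i < m)%nat -> 0 <= V ->
  (exists j, other m i j /\ x j = pos 1%nat) -> (exists j, other m i j /\ x j = pos q) ->
  (forall t, 0 <= t <= 1 -> v m c (deviate x i t) i <= V) ->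
  (1 - pos q) - c * ((pos 1%nat + pos q) / 2) <= V.
Proof.
  intros Hc Hx H Hq Hi HV O1 Oq NE.
  assert (Hp1q : pos 1%nat < pos q) by (apply (pos_lt _ _ _ _ _ H); lia).
  pose proof (pos_01 _ _ _ _ _ Hx H 1 ltac:(lia)). pose proof (pos_01 _ _ _ _ _ Hx H q ltac:(lia)).
  assert (Hc1 : c * ((pos 1%nat + pos q) / 2) >= 0) by (apply Rle_ge, Rmult_le_pos; lra).
  destruct (Req_dec (pos q) 1) as [E0|Hp].
  { lra. }
  set (A := (1 - pos q) - c * ((pos 1%nat + pos q) / 2)).
  destruct (Rle_dec A V) as [|HAV]; auto. exfalso.
  set (d := Rmin (1 - pos q) ((A - V) / (1 + c))).
  assert (Hd1 : d <= 1 - pos q) by apply Rmin_l.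
  assert (Hd2 : d <= (A - V) / (1 + c)) by apply Rmin_r.
  assert (Hdp : 0 < d).
  { unfold d. apply Rmin_pos; [lra|]. apply Rdiv_lt_0_compat; lra. }
  assert (Hcd : (1 + c) * d <= A - V).
  { apply Rmult_le_compat_l with (r := 1 + c) in Hd2; [|lra].
    replace ((1 + c) * ((A - V) / (1 + c))) with (A - V) in Hd2 by (field; lra). auto. }
  set (t := pos q + d).
  specialize (NE t ltac:(unfold t; lra)).
  rewrite (DevRight m c x i t (pos q) (pos 1%nat) Hx Hi ltac:(unfold t; lra) ltac:(unfold t; lra) ltac:(unfold t; lra)) in NE.
  - rewrite N_dev_one, INR1 in NE; auto.
    + assert (Ev : ((1 - (pos q + t) / 2) - c * ((pos 1%nat + t) / 2)) / 1 = A - (1 + c) * d / 2)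
        by (unfold t, A; field).
      rewrite Ev in NE. lra.
    + intros j [Hj _]. pose proof (x_leq _ _ _ _ _ H ltac:(lia) j Hj). unfold t; lra.
  - intros j [Hj _]. pose proof (x_leq _ _ _ _ _ H ltac:(lia) j Hj). unfold t; lra.
  - auto.
  - intros j [Hj _] _. apply (x_leq _ _ _ _ _ H); auto; lia.
  - auto.
  - intros j [Hj _]. apply (x_ge1 _ _ _ _ _ H); auto; lia.
Qed.

Lemma three_contra V X N : (3 <= N)%nat -> V = X / INR N -> X <= 2 * V -> 0 < V -> False.
Proof.
  intros HN E HX HV. apply le_INR in HN. replace (INR 3) with 3 in HN by (simpl; lra).
  assert (X = V * INR N) by (rewrite E; field; lra).
  assert (3 * V <= V * INR N) by (rewrite (Rmult_comm 3); apply Rmult_le_compat_l; lra). lra.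
Qed.

Lemma two_eq V X : V = X / INR 2 -> X = 2 * V.
Proof. intros E. rewrite INR2 in E. rewrite E. field. Qed.

Lemma fwd m c x q pos n (Hm : (2 <= m)%nat) (Hc : 0 <= c < 1)
  (Hx : is_profile m x) (Hdec : decomposition m x q pos n) (Hq : (2 <= q)%nat)
  (NE : forall i, (i < m)%nat -> forall t, 0 <= t <= 1 -> v m c (deviate x i t) i <= v m c x i) :
  n 1%nat = 2%nat /\ n q = 2%nat /\ (forall k, (1 <= k <= q)%nat -> (n k <= 2)%nat) /\
  pos 1%nat = (pos 2%nat - pos 1%nat) / 2 + c / 2 /\
  1 - pos q = (pos 2%nat - pos 1%nat) / 2 + c / 2 /\
  (pos q - pos (q - 1)%nat) / 2 = (pos 2%nat - pos 1%nat) / 2 /\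
  (forall k, (1 < k)%nat -> (k < q)%nat -> n k = 2%nat ->
     (pos k - pos (k - 1)%nat) / 2 = (pos 2%nat - pos 1%nat) / 2 /\
     (pos (S k) - pos k) / 2 = (pos 2%nat - pos 1%nat) / 2) /\
  (forall k, (1 < k)%nat -> (k < q)%nat -> n k = 1%nat -> forall u, (1 <= u)%nat -> (u < q)%nat ->
     (pos (S u) - pos u) / 2 <= (pos (S k) - pos (k - 1)%nat) / 2) /\
  (forall u, (1 <= u)%nat -> (u < q)%nat -> (pos (S u) - pos u) / 2 <= (pos 2%nat - pos 1%nat) / 2).
Proof.
  assert (Hp12 : pos 1%nat < pos 2%nat) by (apply (pos_lt _ _ _ _ _ Hdec); lia).
  assert (Hp1q : pos 1%nat < pos q) by (apply (pos_lt _ _ _ _ _ Hdec); lia).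
  assert (Hpq1 : pos (q - 1)%nat < pos q) by (apply (pos_lt _ _ _ _ _ Hdec); lia).
  assert (Hhpos : forall u, (1 <= u)%nat -> (u < q)%nat -> pos u < pos (S u)) by
    (intros; apply (pos_lt _ _ _ _ _ Hdec); lia).
  pose proof (pos_01 _ _ _ _ _ Hx Hdec 1%nat ltac:(lia)) as B1.
  pose proof (pos_01 _ _ _ _ _ Hx Hdec q ltac:(lia)) as Bq.
  destruct (pos_wit _ _ _ _ _ Hdec 1%nat ltac:(lia)) as [i1 [Hi1 E1]].
  destruct (pos_wit _ _ _ _ _ Hdec q ltac:(lia)) as [iq [Hiq Eq]].
  assert (Oth : forall i k k', (1 <= k <= q)%nat -> (1 <= k' <= q)%nat -> x i = pos k' -> k <> k' ->
     exists j, other m i j /\ x j = pos k) by (intros; eapply other_at'; eauto).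
  assert (Oth2 : forall i k, (1 <= k <= q)%nat -> (2 <= n k)%nat -> exists j, other m i j /\ x j = pos k)
    by (intros; eapply other_at; eauto).
  assert (Gap : forall i k u, (i < m)%nat -> (1 <= k <= q)%nat -> x i = pos k -> (1 <= u)%nat -> (u < q)%nat ->
     (u <> k \/ (2 <= n k)%nat) -> (S u <> k \/ (2 <= n k)%nat) ->
     (pos (S u) - pos u) / 2 <= v m c x i).
  { intros i k u Hi Hk Ei Hu Huq C1 C2.
    rewrite <- (GapDev m c x q pos n i u Hx Hdec Hi Hu Huq).
    - apply NE; auto. pose proof (pos_01 _ _ _ _ _ Hx Hdec u ltac:(lia)).
      pose proof (pos_01 _ _ _ _ _ Hx Hdec (S u) ltac:(lia)). lra.
    - destruct C1 as [C1|C1]; [apply (Oth i u k); auto; lia|]. destruct (Nat.eq_dec u k) as [->|].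
      + apply Oth2; auto.
      + apply (Oth i u k); auto; lia.
    - destruct C2 as [C2|C2]; [apply (Oth i (S u) k); auto; lia|]. destruct (Nat.eq_dec (S u) k) as [->|].
      + apply Oth2; auto.
      + apply (Oth i (S u) k); auto; lia. }
  assert (N1 : (2 <= n 1%nat)%nat).
  { pose proof (n_ge1 _ _ _ _ _ 1%nat Hdec ltac:(lia)). destruct (Nat.eq_dec (n 1%nat) 1) as [E|]; [|lia].
    exfalso.
    assert (Oge : forall j, other m i1 j -> pos 2%nat <= x j).
    { intros j [Hj Hne]. destruct (x_pos _ _ _ _ _ Hdec j Hj) as [k' [Hk' Ek']].
      destruct (Nat.eq_dec k' 1) as [->|]. { exfalso; apply Hne. apply (n1_unique m x q pos n 1%nat i1 j); auto; lia. }
      rewrite Ek'. apply (pos_le _ _ _ _ _ Hdec); lia. }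
    set (t := (pos 1%nat + pos 2%nat) / 2).
    pose proof (pos_01 _ _ _ _ _ Hx Hdec 2%nat ltac:(lia)).
    pose proof (pos_le _ _ _ _ _ Hdec 2%nat q ltac:(lia) ltac:(lia) ltac:(lia)).
    specialize (NE i1 Hi1 t ltac:(unfold t; lra)).
    rewrite (Vx1 m c x q pos n i1 Hx Hdec Hq Hi1 E1), E, INR1 in NE.
    rewrite (DevLeft m c x i1 t (pos 2%nat) (pos q) Hx Hi1 ltac:(unfold t; lra) ltac:(unfold t; lra) ltac:(unfold t; lra)) in NE.
    - rewrite N_dev_one, INR1 in NE.
      + assert (c * (t - pos 1%nat) >= 0) by (apply Rle_ge, Rmult_le_pos; unfold t; lra).
        unfold t in *. lra.
      + auto.
      + intros j Oj. specialize (Oge j Oj). unfold t; lra.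
    - intros j Oj. specialize (Oge j Oj). unfold t; lra.
    - apply (Oth i1 2%nat 1%nat); auto; lia.
    - intros j Oj _. auto.
    - apply (Oth i1 q 1%nat); auto; lia.
    - intros j [Hj _]. apply (x_leq _ _ _ _ _ Hdec); auto; lia. }
  assert (Nq : (2 <= n q)%nat).
  { pose proof (n_ge1 _ _ _ _ _ q Hdec ltac:(lia)). destruct (Nat.eq_dec (n q) 1) as [E|]; [|lia].
    exfalso.
    assert (Ole : forall j, other m iq j -> x j <= pos (q - 1)%nat).
    { intros j [Hj Hne]. destruct (x_pos _ _ _ _ _ Hdec j Hj) as [k' [Hk' Ek']].
      destruct (Nat.eq_dec k' q) as [->|]. { exfalso; apply Hne. apply (n1_unique m x q pos n q iq j); auto; lia. }
      rewrite Ek'. apply (pos_le _ _ _ _ _ Hdec); lia. }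
    set (t := (pos (q - 1)%nat + pos q) / 2).
    pose proof (pos_01 _ _ _ _ _ Hx Hdec (q - 1)%nat ltac:(lia)).
    pose proof (pos_le _ _ _ _ _ Hdec 1%nat (q - 1)%nat ltac:(lia) ltac:(lia) ltac:(lia)).
    specialize (NE iq Hiq t ltac:(unfold t; lra)).
    rewrite (Vxq m c x q pos n iq Hx Hdec Hq Hiq Eq), E, INR1 in NE.
    rewrite (DevRight m c x iq t (pos (q - 1)%nat) (pos 1%nat) Hx Hiq ltac:(unfold t; lra) ltac:(unfold t; lra) ltac:(unfold t; lra)) in NE.
    - rewrite N_dev_one, INR1 in NE.
      + assert (c * (pos q - t) >= 0) by (apply Rle_ge, Rmult_le_pos; unfold t; lra).
        unfold t in *. lra.
      + auto.
      + intros j Oj. specialize (Ole j Oj). unfold t; lra.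
    - intros j Oj. specialize (Ole j Oj). unfold t; lra.
    - apply (Oth iq (q - 1)%nat q); auto; lia.
    - intros j Oj _. auto.
    - apply (Oth iq 1%nat q); auto; lia.
    - intros j [Hj _]. apply (x_ge1 _ _ _ _ _ Hdec); auto; lia. }
  assert (N1' : (n 1%nat <= 2)%nat).
  { destruct (Nat.le_gt_cases (n 1%nat) 2) as [|Hg]; auto. exfalso.
    pose proof (Vx1 m c x q pos n i1 Hx Hdec Hq Hi1 E1) as EV.
    pose proof (Gap i1 1%nat 1%nat Hi1 ltac:(lia) E1 ltac:(lia) ltac:(lia) ltac:(right; lia) ltac:(left; lia)) as GB.
    pose proof (LeftLim m c x q pos n i1 (v m c x i1) ltac:(lra) Hx Hdec Hq Hi1 ltac:(lra)
      (Oth2 i1 1%nat ltac:(lia) ltac:(lia)) (Oth i1 q 1%nat ltac:(lia) ltac:(lia) E1 ltac:(lia)) (NE i1 Hi1)) as GA.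
    apply (three_contra _ _ _ Hg EV); lra. }
  assert (Nq' : (n q <= 2)%nat).
  { destruct (Nat.le_gt_cases (n q) 2) as [|Hg]; auto. exfalso.
    pose proof (Vxq m c x q pos n iq Hx Hdec Hq Hiq Eq) as EV.
    pose proof (Gap iq q (q - 1)%nat Hiq ltac:(lia) Eq ltac:(lia) ltac:(lia) ltac:(left; lia) ltac:(right; lia)) as GB.
    replace (S (q - 1)) with q in GB by lia.
    pose proof (RightLim m c x q pos n iq (v m c x iq) ltac:(lra) Hx Hdec Hq Hiq ltac:(lra)
      (Oth iq 1%nat q ltac:(lia) ltac:(lia) Eq ltac:(lia)) (Oth2 iq q ltac:(lia) ltac:(lia)) (NE iq Hiq)) as GA.
    apply (three_contra _ _ _ Hg EV); lra. }
  assert (Nk : forall k, (1 < k)%nat -> (k < q)%nat -> (n k <= 2)%nat).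
  { intros k Hk1 Hkq. destruct (Nat.le_gt_cases (n k) 2) as [|Hg]; auto. exfalso.
    destruct (pos_wit _ _ _ _ _ Hdec k ltac:(lia)) as [ik [Hik Ek]].
    pose proof (Vxk m c x q pos n ik k Hx Hdec Hk1 Hkq Hik Ek) as EV.
    pose proof (Gap ik k k Hik ltac:(lia) Ek ltac:(lia) ltac:(lia) ltac:(right; lia) ltac:(left; lia)) as GR.
    pose proof (Gap ik k (k - 1)%nat Hik ltac:(lia) Ek ltac:(lia) ltac:(lia) ltac:(left; lia) ltac:(right; lia)) as GL.
    replace (S (k - 1)) with k in GL by lia.
    pose proof (Hhpos k ltac:(lia) Hkq).
    apply (three_contra _ _ _ Hg EV); lra. }
  assert (En1 : n 1%nat = 2%nat) by lia.
  assert (Enq : n q = 2%nat) by lia.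
  pose proof (Vx1 m c x q pos n i1 Hx Hdec Hq Hi1 E1) as EV1. rewrite En1 in EV1. apply two_eq in EV1.
  pose proof (Vxq m c x q pos n iq Hx Hdec Hq Hiq Eq) as EVq. rewrite Enq in EVq. apply two_eq in EVq.
  pose proof (Gap i1 1%nat 1%nat Hi1 ltac:(lia) E1 ltac:(lia) ltac:(lia) ltac:(right; lia) ltac:(left; lia)) as GB1.
  pose proof (LeftLim m c x q pos n i1 (v m c x i1) ltac:(lra) Hx Hdec Hq Hi1 ltac:(lra)
      (Oth2 i1 1%nat ltac:(lia) ltac:(lia)) (Oth i1 q 1%nat ltac:(lia) ltac:(lia) E1 ltac:(lia)) (NE i1 Hi1)) as GA1.
  pose proof (Gap iq q (q - 1)%nat Hiq ltac:(lia) Eq ltac:(lia) ltac:(lia) ltac:(left; lia) ltac:(right; lia)) as GBq.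
  replace (S (q - 1)) with q in GBq by lia.
  pose proof (RightLim m c x q pos n iq (v m c x iq) ltac:(lra) Hx Hdec Hq Hiq ltac:(lra)
      (Oth iq 1%nat q ltac:(lia) ltac:(lia) Eq ltac:(lia)) (Oth2 iq q ltac:(lia) ltac:(lia)) (NE iq Hiq)) as GAq.
  pose proof (Gap i1 1%nat (q - 1)%nat Hi1 ltac:(lia) E1 ltac:(lia) ltac:(lia) ltac:(right; lia) ltac:(left; lia)) as C1.
  replace (S (q - 1)) with q in C1 by lia.
  pose proof (Gap iq q 1%nat Hiq ltac:(lia) Eq ltac:(lia) ltac:(lia) ltac:(left; lia) ltac:(right; lia)) as C2.
  set (V1 := v m c x i1) in *. set (Vq := v m c x iq) in *.
  set (Ip := (pos 2%nat - pos 1%nat) / 2) in *.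
  assert (HV1 : V1 = Ip) by (unfold Ip in *; lra).
  assert (HVq : Vq = Ip) by lra.
  assert (HLq : (pos q - pos (q - 1)%nat) / 2 = Ip) by lra.
  assert (HA1 : pos 1%nat - c * (1 - (pos 1%nat + pos q) / 2) = Ip) by (unfold Ip in *; lra).
  assert (HAq : (1 - pos q) - c * ((pos 1%nat + pos q) / 2) = Ip) by (unfold Ip in *; lra).
  assert (Hs : (1 + c) * (pos 1%nat + pos q - 1) = 0).
  { rewrite <- HAq in HA1. ring_simplify in HA1. ring_simplify. lra. }
  apply Rmult_integral in Hs. destruct Hs as [Hs|Hs]; [lra|].
  assert (Hpq : pos q = 1 - pos 1%nat) by lra.
  rewrite Hpq in GA1. replace (1 - (pos 1%nat + (1 - pos 1%nat)) / 2) with (1/2) in GA1 by lra.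
  assert (HE1 : pos 1%nat = Ip + c / 2) by lra.
  assert (Hhalf : forall u, (1 <= u)%nat -> (u < q)%nat -> (pos (S u) - pos u) / 2 <= Ip).
  { intros u Hu Huq. rewrite <- HV1.
    apply (Gap i1 1%nat u Hi1 ltac:(lia) E1 Hu Huq ltac:(right; lia) ltac:(left; lia)). }
  split; auto. split; auto. split.
  { intros k Hk. destruct (Nat.eq_dec k 1) as [->|]; [lia|]. destruct (Nat.eq_dec k q) as [->|]; [lia|].
    apply Nk; lia. }
  split; auto. split; [lra|]. split; auto. split; [|split; auto].
  - intros k Hk1 Hkq Hn2.
    destruct (pos_wit _ _ _ _ _ Hdec k ltac:(lia)) as [ik [Hik Ek]].
    pose proof (Vxk m c x q pos n ik k Hx Hdec Hk1 Hkq Hik Ek) as EV. rewrite Hn2 in EV. apply two_eq in EV.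
    pose proof (Gap ik k k Hik ltac:(lia) Ek ltac:(lia) ltac:(lia) ltac:(right; lia) ltac:(left; lia)) as GR.
    pose proof (Gap ik k (k - 1)%nat Hik ltac:(lia) Ek ltac:(lia) ltac:(lia) ltac:(left; lia) ltac:(right; lia)) as GL.
    replace (S (k - 1)) with k in GL by lia.
    pose proof (Gap ik k 1%nat Hik ltac:(lia) Ek ltac:(lia) ltac:(lia) ltac:(left; lia) ltac:(right; lia)) as G1.
    pose proof (Hhalf (k - 1)%nat ltac:(lia) ltac:(lia)) as H1. replace (S (k - 1)) with k in H1 by lia.
    pose proof (Hhalf k ltac:(lia) ltac:(lia)) as H2.
    fold Ip in G1. split; lra.
  - intros k Hk1 Hkq Hn1 u Hu Huq.
    destruct (pos_wit _ _ _ _ _ Hdec k ltac:(lia)) as [ik [Hik Ek]].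
    pose proof (Vxk m c x q pos n ik k Hx Hdec Hk1 Hkq Hik Ek) as EV. rewrite Hn1, INR1 in EV.
    pose proof (Hhpos k ltac:(lia) Hkq). pose proof (Hhpos (k - 1)%nat ltac:(lia) ltac:(lia)).
    replace (S (k - 1)) with k in H0 by lia.
    destruct (Nat.eq_dec u k) as [->|]; [lra|].
    destruct (Nat.eq_dec (S u) k) as [<-|]; [replace (S u - 1)%nat with u by lia; lra|].
    pose proof (Gap ik k u Hik ltac:(lia) Ek Hu Huq ltac:(left; lia) ltac:(left; lia)).
    replace (pos (S k) - pos (k - 1)%nat) with (((pos (S k) - pos (k - 1)%nat) / 2) / 1 * 2) by field.
    rewrite <- EV. lra.
Qed.

Lemma lenL_1 q pos : lenL q pos 1 = pos 1%nat - 0.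
Proof. reflexivity. Qed.
Lemma lenL_ne q pos k : k <> 1%nat -> lenL q pos k = (pos k - pos (k - 1)%nat) / 2.
Proof. intros H. unfold lenL. apply Nat.eqb_neq in H. rewrite H. auto. Qed.
Lemma lenR_q q pos : lenR q pos q = 1 - pos q.
Proof. unfold lenR. rewrite Nat.eqb_refl. auto. Qed.
Lemma lenR_ne q pos k : k <> q -> lenR q pos k = (pos (S k) - pos k) / 2.
Proof. intros H. unfold lenR. apply Nat.eqb_neq in H. rewrite H. auto. Qed.

Theorem theorem1 (m : nat) (c : R) (x : nat -> R) (q : nat) (pos : nat -> R) (n : nat -> nat)
  (Hm : (2 <= m)%nat) (Hc : 0 <= c < 1)
  (Hx : is_profile m x) (Hdec : decomposition m x q pos n) (Hq : (2 <= q)%nat) :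
  is_NCNE m c x <->
  let Ip := lenR q pos 1 in
  (* (i) *)
  ((forall k, (1 <= k <= q)%nat -> (n k <= 2)%nat) /\ n 1%nat = 2%nat /\ n q = 2%nat) /\
  (* (ii) *)
  (lenL q pos q = Ip /\
   forall k, (1 < k)%nat -> (k < q)%nat -> n k = 2%nat ->
     lenL q pos k = Ip /\ lenR q pos k = Ip) /\
  (* (iii) *)
  (lenL q pos 1 = Ip + c / 2 /\ lenR q pos q = Ip + c / 2) /\
  (* (iv) *)
  (forall i, (1 <= i <= q)%nat -> n i = 1%nat ->
     (forall k, (1 <= k <= q)%nat -> k <> 1%nat -> lenI q pos i >= lenL q pos k) /\
     (forall k, (1 <= k <= q)%nat -> k <> q -> lenI q pos i >= lenR q pos k)) /\
  (* (v) *)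
  ((forall k, (1 <= k <= q)%nat -> k <> 1%nat -> Ip >= lenL q pos k) /\
   (forall k, (1 <= k <= q)%nat -> k <> q -> Ip >= lenR q pos k)).
Proof.
  assert (HIp : lenR q pos 1 = (pos 2%nat - pos 1%nat) / 2) by (apply lenR_ne; lia).
  cbv zeta. rewrite HIp.
  split.
  - intros [[_ NE] _].
    destruct (fwd m c x q pos n Hm Hc Hx Hdec Hq) as
      [Hn1 [Hnq [Hnle [HE1 [HEq [HLq [Hpair [Hsing Hhalf]]]]]]]].
    { intros i Hi t Ht. apply Rge_le. apply NE; auto. }
    split; [split; auto|].
    split; [split|].
    { rewrite lenL_ne by lia. auto. }
    { intros k Hk1 Hkq Hn2. rewrite lenL_ne, lenR_ne by lia. auto. }
    split; [split|].
    { rewrite lenL_1. lra. }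
    { rewrite lenR_q. lra. }
    split.
    { intros i Hi Hn. assert (Hi1 : i <> 1%nat) by (intro; subst; lia).
      assert (Hiq : i <> q) by (intro; subst; lia).
      unfold lenI. rewrite lenL_ne, lenR_ne by auto.
      pose proof (Hsing i ltac:(lia) ltac:(lia) Hn) as HS.
      split.
      - intros k Hk Hk1. rewrite lenL_ne by auto.
        specialize (HS (k - 1)%nat ltac:(lia) ltac:(lia)). replace (S (k - 1)) with k in HS by lia. lra.
      - intros k Hk Hkq. rewrite lenR_ne by auto.
        specialize (HS k ltac:(lia) ltac:(lia)). lra. }
    split.
    + intros k Hk Hk1. rewrite lenL_ne by auto.
      specialize (Hhalf (k - 1)%nat ltac:(lia) ltac:(lia)). replace (S (k - 1)) with k in Hhalf by lia. lra.
    + intros k Hk Hkq. rewrite lenR_ne by auto. specialize (Hhalf k ltac:(lia) ltac:(lia)). lra.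
  - intros [[Hnle [Hn1 Hnq]] [[HLq Hpair] [[HE1 HEq] [Hsing [Hv1 Hv2]]]]].
    rewrite lenL_ne in HLq by lia. rewrite lenL_1 in HE1. rewrite lenR_q in HEq.
    split.
    + apply (bwd m c x q pos n Hm Hc Hx Hdec Hq Hn1 Hnq Hnle); auto.
      * lra.
      * intros k Hk1 Hkq Hn2. destruct (Hpair k Hk1 Hkq Hn2) as [A B].
        rewrite lenL_ne in A by lia. rewrite lenR_ne in B by lia. auto.
      * intros k Hk1 Hkq Hn. destruct (Hsing k ltac:(lia) Hn) as [_ B].
        specialize (B 1%nat ltac:(lia) ltac:(lia)). rewrite HIp in B.
        unfold lenI in B. rewrite lenL_ne, lenR_ne in B by lia. lra.
      * intros u Hu Huq. specialize (Hv2 u ltac:(lia) ltac:(lia)). rewrite lenR_ne in Hv2 by lia. lra.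
    + destruct (pos_wit _ _ _ _ _ Hdec 1%nat ltac:(lia)) as [i1 [Hi1 E1]].
      destruct (pos_wit _ _ _ _ _ Hdec q ltac:(lia)) as [iq [Hiq Eq]].
      exists i1, iq. repeat split; auto. rewrite E1, Eq.
      pose proof (pos_lt _ _ _ _ _ Hdec 1%nat q ltac:(lia) ltac:(lia) ltac:(lia)). lra.
Qed.
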